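(* Let $\mathcal D$ be a semicartesian symmetric monoidal category. Then the following are equivalent: (1) $\mathcal D$ can be equipped with copy morphisms making it into a positive Markov category (with discard morphisms the unique morphisms to $I$). (2) For every object $X$, the identity $\mathrm{id}_X$ admits an initial dilation $\iota\colon X\to X\otimes E$ such that the marginal $(\mathrm{del}_X\otimes\mathrm{id}_E)\circ\iota\colon X\to E$ is non-creative; and moreover, every morphism $f\colon X\to Y$ with the following property is non-creative: for every dilation $\pi\colon Y\to Y\otimes E$ of $\mathrm{id}_Y$ there is a dilation $\pi'\colon X\to X\otimes E$ of $\mathrm{id}_X$ with $\pi\circ f=(f\otimes\mathrm{id}_E)\circ\pi'$.
   Context: A symmetric monoidal category $(\mathcal D,\otimes,I)$ is semicartesian if $I$ is terminal; write $\mathrm{del}_X\colon X\to I$ for the unique morphism (unitors suppressed). A Markov category is a symmetric monoidal category in which every object $X$ carries morphisms $\mathrm{copy}_X\colon X\to X\otimes X$ and $\mathrm{del}_X\colon X\to I$ forming a commutative comonoid, compatible with the monoidal structure ($\mathrm{copy}_{X\otimes Y}$ is $\mathrm{copy}_X\otimes\mathrm{copy}_Y$ followed by swapping the middle factors, $\mathrm{del}_{X\otimes Y}=\mathrm{del}_X\otimes\mathrm{del}_Y$), with $I$ terminal. A morphism $f\colon A\to X$ in it is deterministic if $\mathrm{copy}_X\circ f=(f\otimes f)\circ\mathrm{copy}_A$. The Markov category is positive if for all $f\colon X\to Y$, $g\colon Y\to Z$ with $g\circ f$ deterministic, $(\mathrm{id}_Y\otimes g)\circ\mathrm{copy}_Y\circ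 f=(f\otimes (g\circ f))\circ\mathrm{copy}_X$. In a semicartesian category: a dilation of $p\colon A\to X$ is a morphism $\pi\colon A\to X\otimes E$ with $(\mathrm{id}_X\otimes\mathrm{del}_E)\circ\pi=p$. Given a dilation $\pi\colon A\to X\otimes E$ and $f_1,f_2\colon E\to E'$, these are $\pi$-dilationally equal if for every dilation $\rho\colon A\to X\otimes E\otimes F$ of $\pi$, $(\mathrm{id}_X\otimes f_1\otimes\mathrm{id}_F)\circ\rho=(\mathrm{id}_X\otimes f_2\otimes\mathrm{id}_F)\circ\rho$. A dilation $\pi\colon A\to X\otimes E$ of $p$ is initial if for every dilation $\pi'\colon A\to X\otimes E'$ of $p$ there is $f\colon E\to E'$ with $(\mathrm{id}_X\otimes f)\circ\pi=\pi'$, unique up to $\pi$-dilational equality. A morphism $p\colon A\to X$ is non-creative if every dilation $\pi\colon A\to X\otimes E$ of $p$ equals $(p\otimes\mathrm{id}_E)\circ\iota$ for some dilation $\iota\colon A\to A\otimes E$ of $\mathrm{id}_A$. *)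

(* Defs.v *)
Set Implicit Arguments.
Unset Strict Implicit.

Record SemicartSMC := {
  ob : Type;
  hom : ob -> ob -> Type;
  comp : forall A B C : ob, hom B C -> hom A B -> hom A C;
  idm : forall A : ob, hom A A;
  comp_id_l : forall A B (f : hom A B), comp (idm B) f = f;
  comp_id_r : forall A B (f : hom A B), comp f (idm A) = f;
  comp_assoc : forall A B C D (f : hom A B) (g : hom B C) (h : hom C D),
      comp h (comp g f) = comp (comp h g) f;

  tens : ob -> ob -> ob;
  tensm : forall A B C D : ob, hom A B -> hom C D -> hom (tens A C) (tens B D);
  unit : ob;
  tensm_id : forall A B, tensm (idm A) (idm B) = idm (tens A B);
  tensm_comp : forall A B C A' B' C' (f : hom A B) (g : hom B C)
      (f' : hom A' B') (g' : hom B' C'),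
      tensm (comp g f) (comp g' f') = comp (tensm g g') (tensm f f');

  assoc : forall A B C, hom (tens (tens A B) C) (tens A (tens B C));
  assoc_inv : forall A B C, hom (tens A (tens B C)) (tens (tens A B) C);
  lunit : forall A, hom (tens unit A) A;
  lunit_inv : forall A, hom A (tens unit A);
  runit : forall A, hom (tens A unit) A;
  runit_inv : forall A, hom A (tens A unit);
  braid : forall A B, hom (tens A B) (tens B A);

  assoc_iso1 : forall A B C, comp (assoc_inv A B C) (assoc A B C) = idm _;
  assoc_iso2 : forall A B C, comp (assoc A B C) (assoc_inv A B C) = idm _;
  lunit_iso1 : forall A, comp (lunit_inv A) (lunit A) = idm _;
  lunit_iso2 : forall A, comp (lunit A) (lunit_inv A) = idm _;
  runit_iso1 : forall A, comp (runit_inv A) (runit A) = idm _;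
  runit_iso2 : forall A, comp (runit A) (runit_inv A) = idm _;

  assoc_nat : forall A A' B B' C C' (f : hom A A') (g : hom B B') (h : hom C C'),
      comp (assoc A' B' C') (tensm (tensm f g) h)
      = comp (tensm f (tensm g h)) (assoc A B C);
  lunit_nat : forall A A' (f : hom A A'),
      comp (lunit A') (tensm (idm unit) f) = comp f (lunit A);
  runit_nat : forall A A' (f : hom A A'),
      comp (runit A') (tensm f (idm unit)) = comp f (runit A);
  braid_nat : forall A A' B B' (f : hom A A') (g : hom B B'),
      comp (braid A' B') (tensm f g) = comp (tensm g f) (braid A B);

  pentagon : forall A B C D,
      comp (assoc A B (tens C D)) (assoc (tens A B) C D)
      = comp (tensm (idm A) (assoc B C D))
          (comp (assoc A (tens B C) D) (tensm (assoc A B C) (idm D)));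
  triangle : forall A B,
      tensm (runit A) (idm B) = comp (tensm (idm A) (lunit B)) (assoc A unit B);
  hexagon : forall A B C,
      comp (assoc B C A) (comp (braid A (tens B C)) (assoc A B C))
      = comp (tensm (idm B) (braid A C))
          (comp (assoc B A C) (tensm (braid A B) (idm C)));
  braid_sym : forall A B, comp (braid B A) (braid A B) = idm (tens A B);

  del : forall A, hom A unit;
  del_unique : forall A (f : hom A unit), f = del A
}.

Arguments hom : clear implicits.
Arguments ob : clear implicits.
Arguments comp {s A B C} _ _.
Arguments idm {s} A.
Arguments tens {s} _ _.
Arguments tensm {s A B C D} _ _.
Arguments unit {s}.
Arguments assoc {s} A B C.
Arguments assoc_inv {s} A B C.
Arguments lunit {s} A.
Arguments lunit_inv {s} A.
Arguments runit {s} A.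
Arguments runit_inv {s} A.
Arguments braid {s} A B.
Arguments del {s} A.

Section Defs.
Variable D : SemicartSMC.

Definition middle_swap (X Y : ob D) :
  hom D (tens (tens X X) (tens Y Y)) (tens (tens X Y) (tens X Y)) :=
  comp (assoc_inv X Y (tens X Y))
   (comp (tensm (idm X)
            (comp (assoc Y X Y) (comp (tensm (braid X Y) (idm Y)) (assoc_inv X Y Y))))
     (assoc X X (tens Y Y))).

Definition is_Markov_copy (copy : forall X : ob D, hom D X (tens X X)) : Prop :=
  (forall X, comp (lunit X) (comp (tensm (del X) (idm X)) (copy X)) = idm X) /\
  (forall X, comp (runit X) (comp (tensm (idm X) (del X)) (copy X)) = idm X) /\
  (forall X, comp (assoc X X X) (comp (tensm (copy X) (idm X)) (copy X))
             = comp (tensm (idm X) (copy X)) (copy X)) /\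
  (forall X, comp (braid X X) (copy X) = copy X) /\
  (forall X Y, copy (tens X Y) = comp (middle_swap X Y) (tensm (copy X) (copy Y))) /\
  (forall X Y : ob D, del (tens X Y) = comp (lunit unit) (tensm (del X) (del Y))).

Definition deterministic (copy : forall X : ob D, hom D X (tens X X))
  (A X : ob D) (f : hom D A X) : Prop :=
  comp (copy X) f = comp (tensm f f) (copy A).

Definition positive (copy : forall X : ob D, hom D X (tens X X)) : Prop :=
  forall (X Y Z : ob D) (f : hom D X Y) (g : hom D Y Z),
    deterministic copy (comp g f) ->
    comp (tensm (idm Y) g) (comp (copy Y) f) = comp (tensm f (comp g f)) (copy X).

Definition dilation_of (A X E : ob D) (p : hom D A X) (pi : hom D A (tens X E)) : Prop :=
  comp (runit X) (comp (tensm (idm X) (del E)) pi) = p.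

Definition dil_equal (A X E E' : ob D) (pi : hom D A (tens X E))
  (f1 f2 : hom D E E') : Prop :=
  forall (F : ob D) (rho : hom D A (tens (tens X E) F)),
    dilation_of pi rho ->
    comp (tensm (tensm (idm X) f1) (idm F)) rho
    = comp (tensm (tensm (idm X) f2) (idm F)) rho.

Definition initial_dilation (A X E : ob D) (p : hom D A X) (pi : hom D A (tens X E)) : Prop :=
  dilation_of p pi /\
  forall (E' : ob D) (pi' : hom D A (tens X E')),
    dilation_of p pi' ->
    (exists f : hom D E E', comp (tensm (idm X) f) pi = pi') /\
    (forall f1 f2 : hom D E E',
        comp (tensm (idm X) f1) pi = pi' ->
        comp (tensm (idm X) f2) pi = pi' ->
        dil_equal pi f1 f2).

Definition non_creative (A X : ob D) (p : hom D A X) : Prop :=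
  forall (E : ob D) (pi : hom D A (tens X E)),
    dilation_of p pi ->
    exists iota : hom D A (tens A E),
      dilation_of (idm A) iota /\ pi = comp (tensm p (idm E)) iota.

Definition lifts_id_dilations (X Y : ob D) (f : hom D X Y) : Prop :=
  forall (E : ob D) (pi : hom D Y (tens Y E)),
    dilation_of (idm Y) pi ->
    exists pi' : hom D X (tens X E),
      dilation_of (idm X) pi' /\ comp pi f = comp (tensm f (idm E)) pi'.

End Defs.

(* Main.v *)
Require Import Defs.
From Corelib Require Import ssreflect.
From Stdlib Require Import ClassicalEpsilon.

Section S.
Variable D : SemicartSMC.
Local Notation "g ∘ f" := (comp g f) (at level 40, left associativity).
Local Notation "f ⊗ g" := (tensm f g) (at level 30, right associativity).
Local Notation I := (@unit D).

Lemma cA {A B C E : ob D} (f : hom D A B) (g : hom D B C) (h : hom D C E) :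
  h ∘ (g ∘ f) = (h ∘ g) ∘ f.
Proof. apply comp_assoc. Qed.

Lemma lift {A B C Z : ob D} {a : hom D B C} {b : hom D A B} {c : hom D A C} :
  a ∘ b = c -> forall x : hom D Z A, a ∘ (b ∘ x) = c ∘ x.
Proof. move=> H x. by rewrite cA H. Qed.

Lemma tT {A B C A' B' C' : ob D} (f : hom D B C) (h : hom D A B) (g : hom D B' C') (k : hom D A' B') :
  (f ⊗ g) ∘ (h ⊗ k) = (f ∘ h) ⊗ (g ∘ k).
Proof. by rewrite tensm_comp. Qed.

Lemma dU {A : ob D} (f g : hom D A I) : f = g.
Proof. by rewrite (del_unique f) (del_unique g). Qed.

Lemma cid_l {A B : ob D} (f : hom D A B) : idm B ∘ f = f. Proof. apply comp_id_l. Qed.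
Lemma cid_r {A B : ob D} (f : hom D A B) : f ∘ idm A = f. Proof. apply comp_id_r. Qed.

Lemma splitT {A B C E : ob D} (f : hom D A B) (g : hom D C E) :
  f ⊗ g = (f ⊗ idm E) ∘ (idm A ⊗ g).
Proof. by rewrite tT cid_l cid_r. Qed.
Lemma splitT' {A B C E : ob D} (f : hom D A B) (g : hom D C E) :
  f ⊗ g = (idm B ⊗ g) ∘ (f ⊗ idm C).
Proof. by rewrite tT cid_l cid_r. Qed.

Lemma tcl {A B E C : ob D} (f : hom D A B) (g : hom D B E) :
  (g ∘ f) ⊗ idm C = (g ⊗ idm C) ∘ (f ⊗ idm C).
Proof. by rewrite tT cid_l. Qed.
Lemma tcr {A B E C : ob D} (f : hom D A B) (g : hom D B E) :
  idm C ⊗ (g ∘ f) = (idm C ⊗ g) ∘ (idm C ⊗ f).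
Proof. by rewrite tT cid_l. Qed.

Lemma a_ai (A B C : ob D) : assoc A B C ∘ assoc_inv A B C = idm _.
Proof. apply assoc_iso2. Qed.
Lemma ai_a (A B C : ob D) : assoc_inv A B C ∘ assoc A B C = idm _.
Proof. apply assoc_iso1. Qed.

Lemma ai_nat {A A' B B' C C' : ob D} (f : hom D A A') (g : hom D B B') (h : hom D C C') :
  assoc_inv A' B' C' ∘ (f ⊗ (g ⊗ h)) = ((f ⊗ g) ⊗ h) ∘ assoc_inv A B C.
Proof.
  rewrite -[assoc_inv A' B' C' ∘ _]cid_r -(a_ai A B C) !cA -(cA _ _ (assoc_inv A' B' C')).
  by rewrite -assoc_nat cA ai_a cid_l.
Qed.

Lemma U1 {A B : ob D} (f g : hom D A B) : idm I ⊗ f = idm I ⊗ g -> f = g.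
Proof.
  move=> H.
  have E: forall h : hom D A B, h = lunit B ∘ (idm I ⊗ h) ∘ lunit_inv A.
  { move=> h. by rewrite lunit_nat -cA lunit_iso2 cid_r. }
  by rewrite (E f) (E g) H.
Qed.

Lemma U2 {A B : ob D} (f g : hom D A B) : f ⊗ idm I = g ⊗ idm I -> f = g.
Proof.
  move=> H.
  have E: forall h : hom D A B, h = runit B ∘ (h ⊗ idm I) ∘ runit_inv A.
  { move=> h. by rewrite runit_nat -cA runit_iso2 cid_r. }
  by rewrite (E f) (E g) H.
Qed.

Lemma Kelly2 (B C : ob D) : lunit (tens B C) ∘ assoc I B C = lunit B ⊗ idm C.
Proof.
  set Z := assoc I (tens I B) C ∘ (assoc I I B ⊗ idm C).
  set Zi := (assoc_inv I I B ⊗ idm C) ∘ assoc_inv I (tens I B) C.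
  have HZ : Z ∘ Zi = idm _.
  { rewrite /Z /Zi -cA (lift (tT _ _ _ _)) a_ai cid_l tensm_id cid_l. apply a_ai. }
  have H : (idm I ⊗ (lunit (tens B C) ∘ assoc I B C)) ∘ Z
         = (idm I ⊗ (lunit B ⊗ idm C)) ∘ Z.
  { rewrite /Z. rewrite -{1}(cid_l (idm I)). rewrite tensm_comp -!cA -pentagon cA -triangle -tensm_id -assoc_nat triangle tcl cA assoc_nat -cA //. }
  apply U1.
  rewrite -(cid_r (idm I ⊗ (lunit (tens B C) ∘ assoc I B C))) -(cid_r (idm I ⊗ (lunit B ⊗ idm C))).
  by rewrite -HZ (cA Zi Z) (cA Zi Z) H.
Qed.

Lemma Kelly1 (A B : ob D) : (idm A ⊗ runit B) ∘ assoc A B I = runit (tens A B).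
Proof.
  apply U2.
  have H : assoc A B I ∘ (((idm A ⊗ runit B) ∘ assoc A B I) ⊗ idm I)
         = assoc A B I ∘ (runit (tens A B) ⊗ idm I).
  { rewrite triangle -tensm_id cA assoc_nat -cA pentagon [RHS]cA -tcr -triangle [RHS]cA -assoc_nat -[RHS]cA -tcl //. }
  rewrite -(cid_l (((idm A ⊗ runit B) ∘ assoc A B I) ⊗ idm I)) -(cid_l (runit (tens A B) ⊗ idm I)).
  by rewrite -(ai_a A B I) -!cA H.
Qed.

Lemma Rb (A : ob D) : lunit A ∘ braid A I = runit A.
Proof.
  apply U2.
  have H : braid A I ∘ (runit A ⊗ idm I) = braid A I ∘ ((lunit A ∘ braid A I) ⊗ idm I).
  { rewrite triangle [LHS]cA braid_nat -Kelly2 -!cA hexagon cA lunit_nat -cA (lift (Kelly2 _ _)) -tcl //. }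
  rewrite -(cid_l (runit A ⊗ idm I)) -(cid_l ((lunit A ∘ braid A I) ⊗ idm I)).
  by rewrite -(braid_sym A I) -!cA H.
Qed.

Lemma BU (B : ob D) : runit B ∘ braid I B = lunit B.
Proof. by rewrite -Rb -cA braid_sym cid_r. Qed.

Definition p1 (A B : ob D) : hom D (tens A B) A := locked (runit A ∘ (idm A ⊗ del B)).
Definition p2 (A B : ob D) : hom D (tens A B) B := locked (lunit B ∘ (del A ⊗ idm B)).
Lemma p1E (A B : ob D) : p1 A B = runit A ∘ (idm A ⊗ del B).
Proof. by rewrite /p1 -lock. Qed.
Lemma p2E (A B : ob D) : p2 A B = lunit B ∘ (del A ⊗ idm B).
Proof. by rewrite /p2 -lock. Qed.

Lemma P1 {A A' B B' : ob D} (f : hom D A A') (g : hom D B B') :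
  p1 A' B' ∘ (f ⊗ g) = f ∘ p1 A B.
Proof.
  rewrite !p1E -cA tT cid_l (dU (del _ ∘ g) (del _)) splitT cA runit_nat -cA //.
Qed.

Lemma P2 {A A' B B' : ob D} (f : hom D A A') (g : hom D B B') :
  p2 A' B' ∘ (f ⊗ g) = g ∘ p2 A B.
Proof.
  rewrite !p2E -cA tT cid_l (dU (del _ ∘ f) (del _)) splitT' cA lunit_nat -cA //.
Qed.

Lemma K1' (A B C : ob D) : (idm A ⊗ p1 B C) ∘ assoc A B C = p1 (tens A B) C.
Proof. rewrite !p1E tcr -cA -assoc_nat cA Kelly1 tensm_id //. Qed.

Lemma T1 (A B C : ob D) : (idm A ⊗ p2 B C) ∘ assoc A B C = p1 A B ⊗ idm C.
Proof. rewrite !p1E !p2E tcr -cA -assoc_nat cA -triangle -tcl //. Qed.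

Lemma K2' (A B C : ob D) : p2 A (tens B C) ∘ assoc A B C = p2 A B ⊗ idm C.
Proof. rewrite !p2E -tensm_id -cA -assoc_nat cA Kelly2 -tcl //. Qed.

Lemma Pb1 (A B : ob D) : p1 B A ∘ braid A B = p2 A B.
Proof. rewrite !p1E !p2E -cA -braid_nat cA BU //. Qed.

Lemma Pb2 (A B : ob D) : p2 B A ∘ braid A B = p1 A B.
Proof. rewrite !p1E !p2E -cA -braid_nat cA Rb //. Qed.

Lemma K1i (A B C : ob D) : p1 (tens A B) C ∘ assoc_inv A B C = idm A ⊗ p1 B C.
Proof. by rewrite -K1' -cA a_ai cid_r. Qed.
Lemma K2i (A B C : ob D) : (p2 A B ⊗ idm C) ∘ assoc_inv A B C = p2 A (tens B C).
Proof. by rewrite -K2' -cA a_ai cid_r. Qed.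
Lemma T1i (A B C : ob D) : (p1 A B ⊗ idm C) ∘ assoc_inv A B C = idm A ⊗ p2 B C.
Proof. by rewrite -T1 -cA a_ai cid_r. Qed.

Lemma P3 (A B C : ob D) : p1 A (tens B C) ∘ assoc A B C = p1 A B ∘ p1 (tens A B) C.
Proof. by rewrite -K1' cA P1 cid_l. Qed.
Lemma P4 (A B C : ob D) : p2 (tens A B) C ∘ assoc_inv A B C = p2 B C ∘ p2 A (tens B C).
Proof. by rewrite -K2i cA P2 cid_l. Qed.

Lemma lift' {A B B' C Z : ob D} {a : hom D B C} {b : hom D A B} {c : hom D B' C} {d : hom D A B'} :
  a ∘ b = c ∘ d -> forall x : hom D Z A, a ∘ (b ∘ x) = c ∘ (d ∘ x).
Proof. move=> H x. by rewrite !cA H. Qed.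

Definition N (X Y : ob D) : hom D (tens X (tens Y Y)) (tens Y (tens X Y)) :=
  locked (assoc Y X Y ∘ ((braid X Y ⊗ idm Y) ∘ assoc_inv X Y Y)).
Lemma NE (X Y : ob D) : N X Y = assoc Y X Y ∘ ((braid X Y ⊗ idm Y) ∘ assoc_inv X Y Y).
Proof. by rewrite /N -lock. Qed.

Lemma msE (X Y : ob D) : middle_swap X Y
  = assoc_inv X Y (tens X Y) ∘ ((idm X ⊗ N X Y) ∘ assoc X X (tens Y Y)).
Proof. by rewrite NE. Qed.

Lemma N1 (X Y : ob D) : p1 Y (tens X Y) ∘ N X Y = p1 Y Y ∘ p2 X (tens Y Y).
Proof.
  rewrite NE (lift (P3 _ _ _)) -!cA (lift (P1 _ _)) -!cA K1i (lift (Pb1 _ _)) P2 //.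
Qed.

Lemma N2 (X Y : ob D) : p2 Y (tens X Y) ∘ N X Y = idm X ⊗ p2 Y Y.
Proof. rewrite NE (lift (K2' _ _ _)) (lift (tT _ _ _ _)) Pb2 cid_l T1i //. Qed.

Lemma N3 (X Y : ob D) : (idm Y ⊗ p1 X Y) ∘ N X Y = braid X Y ∘ (idm X ⊗ p1 Y Y).
Proof. rewrite NE (lift (K1' _ _ _)) (lift (P1 _ _)) -cA K1i //. Qed.

Lemma M1 (X Y : ob D) : p1 (tens X Y) (tens X Y) ∘ middle_swap X Y = p1 X X ⊗ p1 Y Y.
Proof.
  rewrite msE (lift (K1i _ _ _)) (lift (tT _ _ _ _)) cid_l N1 tcr -cA T1 tT cid_l cid_r //.
Qed.

Lemma M2 (X Y : ob D) : p2 (tens X Y) (tens X Y) ∘ middle_swap X Y = p2 X X ⊗ p2 Y Y.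
Proof.
  rewrite msE (lift (P4 _ _ _)) -!cA (lift (P2 _ _)) -!cA (lift (N2 _ _)) K2' tT cid_l cid_r //.
Qed.

Lemma M3 (X Y : ob D) :
  (p2 X Y ⊗ p1 X Y) ∘ middle_swap X Y = braid X Y ∘ (p2 X X ⊗ p1 Y Y).
Proof.
  rewrite msE splitT -tensm_id -!cA -(lift' (ai_nat _ _ _)) (lift (tT _ _ _ _)) cid_l N3 tcr -!cA.
  rewrite -assoc_nat (lift (K2i _ _ _)) (lift (P2 _ _)) -!cA (lift (K2' _ _ _)) tT tensm_id cid_r cid_l //.
Qed.

Lemma dilE {A X E : ob D} (p : hom D A X) (pi : hom D A (tens X E)) :
  dilation_of p pi <-> p1 X E ∘ pi = p.
Proof. by rewrite /dilation_of p1E cA. Qed.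

Lemma margE {X E : ob D} (iota : hom D X (tens X E)) :
  comp (lunit E) (comp (tensm (del X) (idm E)) iota) = p2 X E ∘ iota.
Proof. by rewrite p2E cA. Qed.

(** * (2) => (1) *)
Definition Good {X : ob D} (c : hom D X (tens X X)) : Prop :=
  p1 X X ∘ c = idm X /\ p2 X X ∘ c = idm X /\
  forall (E : ob D) (pi : hom D X (tens X E)), p1 X E ∘ pi = idm X ->
    exists h : hom D X E, pi = (idm X ⊗ h) ∘ c.

Lemma good_cancel {X E : ob D} {c : hom D X (tens X X)} {h h' : hom D X E} :
  p2 X X ∘ c = idm X -> (idm X ⊗ h) ∘ c = (idm X ⊗ h') ∘ c -> h = h'.
Proof.
  move=> H2 H.
  have: p2 X E ∘ ((idm X ⊗ h) ∘ c) = p2 X E ∘ ((idm X ⊗ h') ∘ c) by rewrite H.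
  by rewrite !(lift (P2 _ _)) -!cA H2 !cid_r.
Qed.

Lemma good_unique {X : ob D} {c d : hom D X (tens X X)} :
  Good c -> p1 X X ∘ d = idm X -> p2 X X ∘ d = idm X -> d = c.
Proof.
  move=> [H1 [H2 H3]] D1 D2.
  case: (H3 X d D1) => h Hh.
  have Eh : h = idm X.
  { move: D2. by rewrite Hh (lift (P2 _ _)) -cA H2 cid_r. }
  by rewrite Hh Eh tensm_id cid_l.
Qed.

Lemma good_exists (X E : ob D) (iota : hom D X (tens X E)) :
  initial_dilation (idm X) iota -> non_creative (p2 X E ∘ iota) ->
  exists c : hom D X (tens X X), Good c.
Proof.
  move=> [Hdil Hinit] Hnc.
  have Hd : dilation_of (p2 X E ∘ iota) (braid X E ∘ iota).
  { apply/dilE. by rewrite cA Pb1. }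
  case: (Hnc X _ Hd) => io [Hio Heq].
  move/dilE: Hio => Hio. move/dilE: Hdil => Hdil.
  have Hi : iota = (idm X ⊗ (p2 X E ∘ iota)) ∘ (braid X X ∘ io).
  { by rewrite cA -braid_nat -cA -Heq cA braid_sym cid_l. }
  exists (braid X X ∘ io).
  have C2 : p2 X X ∘ (braid X X ∘ io) = idm X by rewrite cA Pb2.
  have C1 : p1 X X ∘ (braid X X ∘ io) = idm X.
  { rewrite -Hdil Hi (lift (P1 _ _)) cid_l //. }
  split; [exact C1|split; [exact C2|]].
  move=> E' pi Hpi.
  have Hpi' : dilation_of (idm X) pi by apply/dilE.
  case: (Hinit E' pi Hpi') => [[f Hf] _].
  exists (f ∘ (p2 X E ∘ iota)).
  by rewrite -Hf {1}Hi cA -tcr.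
Qed.

Section Copy.
Variable copy : forall X : ob D, hom D X (tens X X).
Hypothesis HG : forall X, Good (copy X).

Lemma cp1 X : p1 X X ∘ copy X = idm X. Proof. by move: (HG X) => [H _]. Qed.
Lemma cp2 X : p2 X X ∘ copy X = idm X. Proof. by move: (HG X) => [_ [H _]]. Qed.
Lemma cwi {X E : ob D} {pi : hom D X (tens X E)} : p1 X E ∘ pi = idm X ->
    exists h : hom D X E, pi = (idm X ⊗ h) ∘ copy X.
Proof. move: (HG X) => [_ [_ H]]. exact: H. Qed.

Lemma gcomm X : braid X X ∘ copy X = copy X.
Proof.
  apply: good_unique (HG X) _ _.
  + by rewrite cA Pb1 cp2.
  + by rewrite cA Pb2 cp1.
Qed.

Lemma good_markov : is_Markov_copy copy.
Proof.
  split; [|split; [|split; [|split; [|split]]]].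
  - move=> X. by rewrite cA -p2E cp2.
  - move=> X. by rewrite cA -p1E cp1.
  - move=> X.
    set L := assoc X X X ∘ ((copy X ⊗ idm X) ∘ copy X).
    have HL1 : p1 X (tens X X) ∘ L = idm X.
    { rewrite /L (lift (P3 _ _ _)) -!cA (lift (P1 _ _)) -!cA cp1 cid_r cp1 //. }
    case: (cwi HL1) => k Hk.
    have K1 : p1 X X ∘ k = idm X.
    { apply: (good_cancel (cp2 X)).
      have := f_equal (fun z => (idm X ⊗ p1 X X) ∘ z) Hk. rewrite /= (lift (tT _ _ _ _)) cid_l => <-.
      by rewrite /L (lift (K1' _ _ _)) (lift (P1 _ _)) -cA cp1 cid_r tensm_id cid_l. }
    have K2 : p2 X X ∘ k = idm X.
    { apply: (good_cancel (cp2 X)).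
      have := f_equal (fun z => (idm X ⊗ p2 X X) ∘ z) Hk. rewrite /= (lift (tT _ _ _ _)) cid_l => <-.
      by rewrite /L (lift (T1 _ _ _)) (lift (tT _ _ _ _)) cp1 cid_l tensm_id. }
    have Ek := good_unique (HG X) K1 K2.
    by rewrite -/L Hk Ek.
  - move=> X. apply: good_unique (HG X) _ _.
    + by rewrite cA Pb1 cp2.
    + by rewrite cA Pb2 cp1.
  - move=> X Y. symmetry. apply: good_unique (HG _) _ _.
    + by rewrite cA M1 tT !cp1 tensm_id.
    + by rewrite cA M2 tT !cp2 tensm_id.
  - move=> X Y. apply: dU.
Qed.

Hypothesis Hnc : forall (X Y : ob D) (f : hom D X Y), lifts_id_dilations f -> non_creative f.

Lemma det_nc {A B : ob D} {q : hom D A B} : deterministic copy q -> non_creative q.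
Proof.
  move=> Hq. apply: Hnc => E pi /dilE Hpi.
  case: (cwi Hpi) => h Hh.
  exists ((idm A ⊗ (h ∘ q)) ∘ copy A). split.
  - apply/dilE. by rewrite cA P1 cid_l cp1.
  - by rewrite Hh -cA Hq cA tT cid_l cA tT cid_l cid_r.
Qed.

Lemma good_positive : positive copy.
Proof.
  move=> X Y Z f g Hdet.
  set psi := (idm Y ⊗ g) ∘ (copy Y ∘ f).
  have Hp1 : p1 Y Z ∘ psi = f by rewrite /psi cA P1 cid_l cA cp1 cid_l.
  have Hp2 : p2 Y Z ∘ psi = g ∘ f by rewrite /psi cA P2 -cA (lift (cp2 _)) cid_l.
  have Hd : dilation_of (g ∘ f) (braid Y Z ∘ psi).
  { apply/dilE. by rewrite cA Pb1 Hp2. }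
  case: (det_nc Hdet _ _ Hd) => io [/dilE Hio Heq].
  case: (cwi Hio) => h Hh.
  have Hpsi : psi = (h ⊗ (g ∘ f)) ∘ copy X.
  { rewrite -[psi]cid_l -(braid_sym Y Z) -cA Heq Hh (lift (tT _ _ _ _)) cid_r cid_l cA braid_nat -cA gcomm //. }
  have Hh' : h = f.
  { by rewrite -Hp1 Hpsi cA P1 -cA cp1 cid_r. }
  rewrite -/psi Hpsi Hh' //.
Qed.
End Copy.

(** * (1) => (2) *)
Section FromMarkov.
Variable copy : forall X : ob D, hom D X (tens X X).
Hypothesis HM : is_Markov_copy copy.
Hypothesis HP : positive copy.

Lemma mp1 X : p1 X X ∘ copy X = idm X.
Proof. case: HM => _ [H _]. by rewrite p1E -cA H. Qed.
Lemma mp2 X : p2 X X ∘ copy X = idm X.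
Proof. case: HM => H _. by rewrite p2E -cA H. Qed.
Lemma mcomm X : braid X X ∘ copy X = copy X.
Proof. by case: HM => _ [_ [_ [H _]]]. Qed.
Lemma mtens X Y : copy (tens X Y) = middle_swap X Y ∘ (copy X ⊗ copy Y).
Proof. by case: HM => _ [_ [_ [_ [H _]]]]. Qed.

Lemma PB (Y E : ob D) : (p2 Y E ⊗ p1 Y E) ∘ copy (tens Y E) = braid Y E.
Proof. by rewrite mtens (lift (M3 _ _)) -cA tT mp2 mp1 tensm_id cid_r. Qed.

Lemma IP {A Y E : ob D} (psi : hom D A (tens Y E)) :
  deterministic copy (p1 Y E ∘ psi) ->
  psi = ((p1 Y E ∘ psi) ⊗ (p2 Y E ∘ psi)) ∘ copy A.
Proof.
  move=> Hd.
  have H := HP _ _ _ _ _ Hd.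
  have H' := f_equal (fun z => (p2 Y E ⊗ idm Y) ∘ z) H. simpl in H'.
  rewrite (lift (tT _ _ _ _)) cid_l cid_r cA PB in H'.
  rewrite cA tT cid_l in H'.
  transitivity (braid E Y ∘ (braid Y E ∘ psi)); first by rewrite cA braid_sym cid_l.
  by rewrite H' cA braid_nat -cA mcomm.
Qed.

Lemma det_id X : deterministic copy (idm X).
Proof. by rewrite /deterministic cid_r tensm_id cid_l. Qed.

Lemma markov_2a X : exists (E : ob D) (iota : hom D X (tens X E)),
       initial_dilation (idm X) iota /\
       non_creative (comp (lunit E) (comp (tensm (del X) (idm E)) iota)).
Proof.
  exists X, (copy X). split; [split|].
  - apply/dilE. exact: mp1.
  - move=> E' pi /dilE Hpi. split.
    + exists (p2 X E' ∘ pi).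
      have := IP pi. rewrite Hpi => H. by rewrite {2}(H (det_id X)).
    + move=> f1 f2 H1 H2.
      have Ef : f1 = f2.
      { apply: (good_cancel (mp2 X)). by rewrite H1 H2. }
      move=> F rho _. by rewrite Ef.
  - rewrite margE mp2 => E pi Hpi. exists pi. split; first exact Hpi.
    by rewrite tensm_id cid_l.
Qed.

Lemma markov_2b (X Y : ob D) (f : hom D X Y) : lifts_id_dilations f -> non_creative f.
Proof.
  move=> Hl.
  have Hc : dilation_of (idm Y) (copy Y) by apply/dilE; exact: mp1.
  case: (Hl Y (copy Y) Hc) => pi' [/dilE Hpi' Heq].
  have Epi' := IP pi'. rewrite Hpi' in Epi'. have {}Epi' := Epi' (det_id X).
  have Hdet : deterministic copy f.
  { rewrite /deterministic Heq Epi' cA tT cid_r.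
    have Hh : p2 X Y ∘ pi' = f.
    { have E1 : p2 Y Y ∘ ((f ⊗ idm Y) ∘ pi') = f by rewrite -Heq cA mp2 cid_l.
      by rewrite (lift (P2 _ _)) cid_l in E1. }
    by rewrite Hh cid_l. }
  move=> E pi /dilE Hpi.
  have Epi := IP pi. rewrite Hpi in Epi. have {}Epi := Epi Hdet.
  exists ((idm X ⊗ (p2 Y E ∘ pi)) ∘ copy X). split.
  - apply/dilE. by rewrite cA P1 cid_l mp1.
  - by rewrite {1}Epi cA tT cid_l cid_r.
Qed.
End FromMarkov.
End S.

Theorem corollary4p20 (D : SemicartSMC) :
  (exists copy : forall X : ob D, hom D X (tens X X),
      is_Markov_copy copy /\ positive copy)
  <->
  ((forall X : ob D, exists (E : ob D) (iota : hom D X (tens X E)),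
       initial_dilation (idm X) iota /\
       non_creative (comp (lunit E) (comp (tensm (del X) (idm E)) iota))) /\
   (forall (X Y : ob D) (f : hom D X Y),
       lifts_id_dilations f -> non_creative f)).
Proof.
  split.
  - move=> [copy [HM HP]]. split.
    + exact: markov_2a HM HP.
    + exact: markov_2b HM HP.
  - move=> [H2a H2b].
    have HG : forall X : ob D, exists c : hom D X (tens X X), @Good D X c.
    { move=> X. case: (H2a X) => E [iota [Hin Hnc]].
      rewrite margE in Hnc. exact: good_exists Hin Hnc. }
    pose copy := fun X => proj1_sig (constructive_indefinite_description _ (HG X)).
    have HGc : forall X, @Good D X (copy X).
    { move=> X. exact: proj2_sig (constructive_indefinite_description _ (HG X)). }
    exists copy. split.
    + exact: good_markov HGc.
    + exact: good_positive HGc H2b.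
Qed.
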